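(* Let $\nu\in\mathbb{R}$, let $J\subset(-\nu,\infty)$ be an open interval, and let $f:J\to\mathbb{R}$ be smooth. Let $q(u_1,u_2,u_3)$ be a smooth solution on $J^3$ of the system $$2(u_i-u_j)\frac{\partial^2 q}{\partial u_i\partial u_j}=\frac{\partial q}{\partial u_i}-\frac{\partial q}{\partial u_j}\quad(i,j=1,2,3),\qquad q(u,u,u)=f(u).$$ Put $\gamma=u_1+u_2+u_3+2\nu$ and define $$w_i=\big(\lambda_i(u_1,u_2,u_3)-\gamma\big)\frac{\partial q}{\partial u_i}+q,\qquad i=1,2,3.$$ Then on $\{u_3<u_2<u_1\}\cap J^3$ the functions $w_i$ satisfy $$\frac{\partial w_i}{\partial u_j}=B_{ij}(w_i-w_j),\qquad B_{ij}=\frac12\,\frac{(\lambda_i-\gamma)-2(u_i-u_j)}{(\lambda_j-\gamma)(u_i-u_j)},\quad i\neq j.$$ With the $\lambda_i$ (and hence the $w_i$) extended continuously to the boundary, the $w_i$ also satisfy the boundary conditions $$w_1(u_1,u_1,u_3)=w_2(u_1,u_1,u_3),\qquad w_3(u_1,u_1,u_3)=f(u_3),$$ $$w_1(u_1,u_3,u_3)=f(u_1),\qquad w_2(u_1,u_3,u_3)=w_3(u_1,u_3,u_3).$$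
   Context: For $-\nu<u_3<u_2<u_1$ define $$I(u_1,u_2,u_3)=\int_{u_3}^{u_2}\frac{\eta+\nu}{\sqrt{(\eta+\nu)(u_1-\eta)(u_2-\eta)(\eta-u_3)}}\,d\eta,$$ and for $i=1,2,3$ $$\lambda_i=u_1+u_2+u_3+2\nu-\frac{I}{\partial I/\partial u_i}.$$ These functions extend continuously to the boundary of their domain: - on $u_2=u_3<u_1$: $\lambda_1=3u_1+2\nu$ and $\lambda_2=\lambda_3=u_1+2u_3+2\nu-4(u_3+\nu)(u_1-u_3)/(u_1+\nu)$; - on $u_1=u_2>u_3$: $\lambda_1=\lambda_2=2u_1+u_3+2\nu$ and $\lambda_3=3u_3+2\nu$. The boundary value problem for $q$ is known to have a unique solution, which is symmetric in $u_1,u_2,u_3$. It is given explicitly by $$q(u_1,u_2,u_3)=\frac{1}{2\sqrt2\,\pi}\int_{-1}^1\int_{-1}^1\frac{f\big(\tfrac{1+\mu}{2}\tfrac{1+\tau}{2}u_1+\tfrac{1+\mu}{2}\tfrac{1-\tau}{2}u_2+\tfrac{1-\mu}{2}u_3\big)}{\sqrt{(1-\mu)(1-\tau^2)}}\,d\mu\,d\tau.$$ *)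

(* Defs.v *)
From Stdlib Require Import Reals.
From Coquelicot Require Import Coquelicot.
Open Scope R_scope.

Definition pd1 (g : R -> R -> R -> R) (u1 u2 u3 : R) : R :=
  Derive (fun t => g t u2 u3) u1.
Definition pd2 (g : R -> R -> R -> R) (u1 u2 u3 : R) : R :=
  Derive (fun t => g u1 t u3) u2.
Definition pd3 (g : R -> R -> R -> R) (u1 u2 u3 : R) : R :=
  Derive (fun t => g u1 u2 t) u3.
(* index i in {1,2,3} (only used for those values) *)
Definition pd (i : nat) (g : R -> R -> R -> R) : R -> R -> R -> R :=
  match i with 1%nat => pd1 g | 2%nat => pd2 g | _ => pd3 g end.
Definition coord (i : nat) (u1 u2 u3 : R) : R :=
  match i with 1%nat => u1 | 2%nat => u2 | _ => u3 end.
Definition along (j : nat) (g : R -> R -> R -> R) (u1 u2 u3 : R) : R -> R :=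
  match j with
  | 1%nat => fun t => g t u2 u3
  | 2%nat => fun t => g u1 t u3
  | _ => fun t => g u1 u2 t end.

Fixpoint Ck3 (k : nat) (U : R -> R -> R -> Prop) (g : R -> R -> R -> R) : Prop :=
  (forall u1 u2 u3, U u1 u2 u3 ->
     continuous (fun p : R * R * R => g (fst (fst p)) (snd (fst p)) (snd p))
                ((u1, u2), u3)) /\
  match k with
  | O => True
  | S k' =>
    (forall u1 u2 u3, U u1 u2 u3 ->
       ex_derive (fun t => g t u2 u3) u1 /\
       ex_derive (fun t => g u1 t u3) u2 /\
       ex_derive (fun t => g u1 u2 t) u3) /\
    Ck3 k' U (pd1 g) /\ Ck3 k' U (pd2 g) /\ Ck3 k' U (pd3 g)
  end.
Definition smooth3 (U : R -> R -> R -> Prop) (g : R -> R -> R -> R) : Prop :=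
  forall k, Ck3 k U g.

Definition smooth1 (J : R -> Prop) (f : R -> R) : Prop :=
  forall n x, J x -> ex_derive_n f n x.

Definition in_interval (a b : Rbar) (x : R) : Prop :=
  Rbar_lt a x /\ Rbar_lt x b.

Definition Iint (nu u1 u2 u3 : R) : R :=
  RInt_gen (fun eta => (eta + nu) /
      sqrt ((eta + nu) * (u1 - eta) * (u2 - eta) * (eta - u3)))
    (at_right u3) (at_left u2).

Definition gam (nu u1 u2 u3 : R) : R := u1 + u2 + u3 + 2 * nu.

(* lambda_i on the open domain u3 < u2 < u1 *)
Definition lam (nu : R) (i : nat) (u1 u2 u3 : R) : R :=
  gam nu u1 u2 u3 - Iint nu u1 u2 u3 / pd i (Iint nu) u1 u2 u3.

(* lambda_i extended continuously to the boundary (values as given) *)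
Definition lam_ext (nu : R) (i : nat) (u1 u2 u3 : R) : R :=
  if Rlt_dec u3 u2 then
    if Rlt_dec u2 u1 then lam nu i u1 u2 u3
    else (* u1 = u2 > u3 *)
      match i with
      | 1%nat | 2%nat => 2 * u1 + u3 + 2 * nu
      | _ => 3 * u3 + 2 * nu end
  else (* u2 = u3 < u1 *)
    match i with
    | 1%nat => 3 * u1 + 2 * nu
    | _ => u1 + 2 * u3 + 2 * nu - 4 * (u3 + nu) * (u1 - u3) / (u1 + nu) end.

Definition wfun (nu : R) (q : R -> R -> R -> R) (i : nat) (u1 u2 u3 : R) : R :=
  (lam_ext nu i u1 u2 u3 - gam nu u1 u2 u3) * pd i q u1 u2 u3 + q u1 u2 u3.

Definition Bcoef (nu : R) (i j : nat) (u1 u2 u3 : R) : R :=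
  / 2 * ((lam nu i u1 u2 u3 - gam nu u1 u2 u3)
          - 2 * (coord i u1 u2 u3 - coord j u1 u2 u3))
      / ((lam nu j u1 u2 u3 - gam nu u1 u2 u3)
          * (coord i u1 u2 u3 - coord j u1 u2 u3)).

(* Main.v *)
Require Import Defs.
From Stdlib Require Import Reals Lra Lia.
From Coquelicot Require Import Coquelicot.
Open Scope R_scope.
Lemma isd_plus (f g : R -> R) (x df dg : R) : is_derive f x df -> is_derive g x dg ->
  is_derive (fun t => f t + g t) x (df + dg).
Proof. intros. apply (is_derive_plus f g x df dg); auto. Qed.
Lemma isd_minus (f g : R -> R) (x df dg : R) : is_derive f x df -> is_derive g x dg ->
  is_derive (fun t => f t - g t) x (df - dg).
Proof. intros. apply (is_derive_minus f g x df dg); auto. Qed.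
Lemma isd_mult (f g : R -> R) (x df dg : R) : is_derive f x df -> is_derive g x dg ->
  is_derive (fun t => f t * g t) x (df * g x + f x * dg).
Proof. intros. apply (is_derive_mult f g x df dg); auto. intros; apply Rmult_comm. Qed.
Lemma isd_const (c x : R) : is_derive (fun _ => c) x 0.
Proof. apply (is_derive_const c x). Qed.
Lemma isd_id (x : R) : is_derive (fun t : R => t) x 1.
Proof. apply (is_derive_id x). Qed.
Lemma isd_scal (c : R) (f : R -> R) (x df : R) : is_derive f x df ->
  is_derive (fun t => c * f t) x (c * df).
Proof. intros. apply (is_derive_scal f x c df); auto. Qed.
Lemma isd_ext (f g : R -> R) (x l l' : R) : (forall t, f t = g t) -> l = l' -> is_derive f x l -> is_derive g x l'.
Proof. intros H -> D. eapply is_derive_ext. exact H. exact D. Qed.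
Lemma isd_comp (f g : R -> R) (x df dg : R) : is_derive f (g x) df -> is_derive g x dg ->
  is_derive (fun t => f (g t)) x (dg * df).
Proof. intros. apply (is_derive_comp f g x df dg); auto. Qed.


Lemma DL_pol_1 f x y dx dy :
  DL_pol 1 f x y dx dy =
  f x y + (Derive (fun t => f t y) x * dx + Derive (fun z => f x z) y * dy).
Proof.
  unfold DL_pol, differential, partial_derive. simpl.
  unfold Binomial.C. simpl. field.
Qed.

Lemma C2_differentiable f x y :
  locally_2d (fun u v => ex_diff_n f 2 u v) x y ->
  differentiable_pt_lim f x y (Derive (fun t => f t y) x) (Derive (fun z => f x z) y).
Proof.
  intros H.
  destruct (Taylor_Lagrange_2d f 1 x y H) as [D HD].
  intros eps.
  assert (HD0 : 0 < Rabs D + 1) by (pose proof (Rabs_pos D); lra).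
  assert (Hd : 0 < eps / (Rabs D + 1)).
  { apply Rdiv_lt_0_compat. apply cond_pos. lra. }
  destruct HD as [d Hd1].
  exists (mkposreal _ (Rmin_stable_in_posreal d (mkposreal _ Hd))).
  intros u v Hu Hv. simpl in Hu, Hv.
  assert (Hu1 : Rabs (u - x) < d) by (eapply Rlt_le_trans; [exact Hu| apply Rmin_l]).
  assert (Hv1 : Rabs (v - y) < d) by (eapply Rlt_le_trans; [exact Hv| apply Rmin_l]).
  assert (Hu2 : Rabs (u - x) < eps / (Rabs D + 1)) by (eapply Rlt_le_trans; [exact Hu| apply Rmin_r]).
  assert (Hv2 : Rabs (v - y) < eps / (Rabs D + 1)) by (eapply Rlt_le_trans; [exact Hv| apply Rmin_r]).
  specialize (Hd1 u v Hu1 Hv1).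
  rewrite DL_pol_1 in Hd1.
  set (m := Rmax (Rabs (u - x)) (Rabs (v - y))) in *.
  assert (Hm0 : 0 <= m) by (unfold m; eapply Rle_trans; [apply Rabs_pos | apply Rmax_l]).
  assert (Hm1 : m <= eps / (Rabs D + 1)).
  { unfold m; apply Rmax_lub; lra. }
  replace (f u v - f x y - (Derive (fun t => f t y) x * (u - x) + Derive (fun z => f x z) y * (v - y)))
    with (f u v - (f x y + (Derive (fun t => f t y) x * (u - x) + Derive (fun z => f x z) y * (v - y)))) by ring.
  eapply Rle_trans. exact Hd1.
  simpl. rewrite Rmult_1_r.
  apply Rle_trans with (Rabs D * (m * m)).
  { apply Rmult_le_compat_r. apply Rmult_le_pos; auto. apply Rle_abs. }
  apply Rle_trans with ((Rabs D + 1) * m * m).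
  { pose proof (Rabs_pos D). nra. }
  apply Rmult_le_compat_r. auto.
  apply (Rmult_le_reg_l (/ (Rabs D + 1))). apply Rinv_0_lt_compat; lra.
  field_simplify. 2: lra. 2: lra. unfold Rdiv in Hm1. lra.
Qed.
Lemma cont3_12 (g : R -> R -> R -> R) a b y :
  continuous (fun p : R * R * R => g (fst (fst p)) (snd (fst p)) (snd p)) ((a, b), y) ->
  continuity_2d_pt (fun u v => g u v y) a b.
Proof.
  intros H. apply continuity_2d_pt_filterlim.
  change (continuous (fun z : R * R => g (fst z) (snd z) y) (a, b)).
  apply (continuous_comp_2 (fun z : R * R => z) (fun _ => y)
           (fun (p : R * R) (t : R) => g (fst p) (snd p) t)).
  apply continuous_id. apply continuous_const. exact H.
Qed.

Lemma cont3_23 (g : R -> R -> R -> R) x a b :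
  continuous (fun p : R * R * R => g (fst (fst p)) (snd (fst p)) (snd p)) ((x, a), b) ->
  continuity_2d_pt (fun u v => g x u v) a b.
Proof.
  intros H. apply continuity_2d_pt_filterlim.
  change (continuous (fun z : R * R => g x (fst z) (snd z)) (a, b)).
  apply (continuous_comp_2 (fun z : R * R => (x, fst z)) (fun z => snd z)
           (fun (p : R * R) (t : R) => g (fst p) (snd p) t)).
  apply (continuous_comp_2 (fun _ : R * R => x) (fun z : R * R => fst z) (fun u v => (u, v))).
  apply continuous_const. apply continuous_fst.
  apply (continuous_ext (fun z : R * R => z)). intros [? ?]; reflexivity. apply continuous_id.
  apply continuous_snd. exact H.
Qed.

Lemma Ck3_exdiff12 U : forall n g a b y, Ck3 n U g -> U a b y ->
  ex_diff_n (fun u v => g u v y) n a b.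
Proof.
  induction n; intros g a b y Hg HU.
  - simpl. split; auto. apply cont3_12. apply (proj1 Hg _ _ _ HU).
  - destruct Hg as [Hc [Hd [H1 [H2 H3]]]].
    simpl. split. apply cont3_12. apply (Hc _ _ _ HU).
    destruct (Hd _ _ _ HU) as [D1 [D2 D3]].
    split. exact D1. split. exact D2. split.
    apply (IHn (pd1 g) a b y H1 HU).
    apply (IHn (pd2 g) a b y H2 HU).
Qed.

Lemma Ck3_exdiff23 U : forall n g x a b, Ck3 n U g -> U x a b ->
  ex_diff_n (fun u v => g x u v) n a b.
Proof.
  induction n; intros g x a b Hg HU.
  - simpl. split; auto. apply cont3_23. apply (proj1 Hg _ _ _ HU).
  - destruct Hg as [Hc [Hd [H1 [H2 H3]]]].
    simpl. split. apply cont3_23. apply (Hc _ _ _ HU).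
    destruct (Hd _ _ _ HU) as [D1 [D2 D3]].
    split. exact D2. split. exact D3. split.
    apply (IHn (pd2 g) x a b H2 HU).
    apply (IHn (pd3 g) x a b H3 HU).
Qed.

Definition UJ (a b : Rbar) := fun u1 u2 u3 => in_interval a b u1 /\ in_interval a b u2 /\ in_interval a b u3.

Lemma in_int_loc a b x : in_interval a b x ->
  exists e : posreal, forall z, Rabs (z - x) < e -> in_interval a b z.
Proof.
  intros [H1 H2].
  destruct (locally_interval (in_interval a b) x a b H1 H2) as [e He].
  { intros z Hz1 Hz2; split; auto. }
  exists e. intros z Hz. apply He. exact Hz.
Qed.

Lemma diag12 a b g y t : Ck3 2 (UJ a b) g -> in_interval a b y -> in_interval a b t ->
  is_derive (fun s => g s s y) t (pd1 g t t y + pd2 g t t y).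
Proof.
  intros Hg Hy Ht.
  apply is_derive_Reals.
  replace (pd1 g t t y + pd2 g t t y) with (pd1 g t t y * 1 + pd2 g t t y * 1) by ring.
  apply (derivable_pt_lim_comp_2d (fun u v => g u v y) (fun s => s) (fun s => s)).
  2, 3: apply derivable_pt_lim_id.
  apply C2_differentiable.
  destruct (in_int_loc a b t Ht) as [e He].
  exists e. intros u v Hu Hv.
  apply (Ck3_exdiff12 (UJ a b) 2 g u v y Hg).
  split; [apply He; auto | split; [apply He; auto | exact Hy]].
Qed.

Lemma diag23 a b g x t : Ck3 2 (UJ a b) g -> in_interval a b x -> in_interval a b t ->
  is_derive (fun s => g x s s) t (pd2 g x t t + pd3 g x t t).
Proof.
  intros Hg Hx Ht.
  apply is_derive_Reals.
  replace (pd2 g x t t + pd3 g x t t) with (pd2 g x t t * 1 + pd3 g x t t * 1) by ring.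
  apply (derivable_pt_lim_comp_2d (fun u v => g x u v) (fun s => s) (fun s => s)).
  2, 3: apply derivable_pt_lim_id.
  apply C2_differentiable.
  destruct (in_int_loc a b t Ht) as [e He].
  exists e. intros u v Hu Hv.
  apply (Ck3_exdiff23 (UJ a b) 2 g x u v Hg).
  split; [exact Hx | split; apply He; auto].
Qed.

Lemma in_int_between a b x y z : in_interval a b x -> in_interval a b y ->
  Rmin x y <= z <= Rmax x y -> in_interval a b z.
Proof.
  intros [Hx1 Hx2] [Hy1 Hy2] [Hz1 Hz2]. split.
  - destruct (Rle_dec x y).
    + rewrite Rmin_left in Hz1 by lra. apply (Rbar_lt_le_trans a (Finite x) (Finite z)). exact Hx1. simpl. exact Hz1.
    + rewrite Rmin_right in Hz1 by lra. apply (Rbar_lt_le_trans a (Finite y) (Finite z)). exact Hy1. simpl. exact Hz1.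
  - destruct (Rle_dec x y).
    + rewrite Rmax_right in Hz2 by lra. apply (Rbar_le_lt_trans (Finite z) (Finite y) b). simpl. exact Hz2. exact Hy2.
    + rewrite Rmax_left in Hz2 by lra. apply (Rbar_le_lt_trans (Finite z) (Finite x) b). simpl. exact Hz2. exact Hx2.
Qed.

Lemma const_of_deriv0 a b (h : R -> R) x y : in_interval a b x -> in_interval a b y ->
  (forall t, in_interval a b t -> is_derive h t 0) -> h x = h y.
Proof.
  intros Hx Hy Hd.
  destruct (MVT_gen h y x (fun _ => 0)) as [c [_ Hc]].
  - intros t Ht. apply Hd. apply (in_int_between a b x y); [exact Hx | exact Hy|].
    rewrite Rmin_comm, Rmax_comm. lra.
  - intros t Ht. apply continuity_pt_filterlim. apply (ex_derive_continuous (K:=R_AbsRing) (V:=R_NormedModule)). exists 0. apply Hd.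
    apply (in_int_between a b x y); [exact Hx | exact Hy|].
    rewrite Rmin_comm, Rmax_comm. lra.
  - lra.
Qed.

Lemma bd3 (a b : Rbar) (f : R -> R) (q : R -> R -> R -> R)
  (Hq : smooth3 (fun u1 u2 u3 => in_interval a b u1 /\ in_interval a b u2 /\
                           in_interval a b u3) q)
  (HP : forall (i j : nat) (u1 u2 u3 : R),
     (1 <= i <= 3)%nat -> (1 <= j <= 3)%nat ->
     in_interval a b u1 -> in_interval a b u2 -> in_interval a b u3 ->
     2 * (coord i u1 u2 u3 - coord j u1 u2 u3) * pd i (pd j q) u1 u2 u3
     = pd i q u1 u2 u3 - pd j q u1 u2 u3)
  (Hf : forall u, in_interval a b u -> q u u u = f u) x y : in_interval a b x -> in_interval a b y ->
  q x x y + 2 * (y - x) * pd3 q x x y = f y.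
Proof.
  intros Hx Hy.
  assert (H3 : Ck3 2 (UJ a b) (pd3 q)) by (apply (Hq 3%nat)).
  assert (Hq2 : Ck3 2 (UJ a b) q) by apply Hq.
  assert (E : (fun t => q t t y + 2 * (y - t) * pd3 q t t y) x =
              (fun t => q t t y + 2 * (y - t) * pd3 q t t y) y).
  { apply (const_of_deriv0 a b (fun t => q t t y + 2 * (y - t) * pd3 q t t y) x y Hx Hy).
    intros t Ht.
    pose proof (diag12 a b q y t Hq2 Hy Ht) as D1.
    pose proof (diag12 a b (pd3 q) y t H3 Hy Ht) as D2.
    pose proof (HP 1%nat 3%nat t t y) as P1. pose proof (HP 2%nat 3%nat t t y) as P2.
    simpl in P1, P2.
    specialize (P1 ltac:(lia) ltac:(lia) Ht Ht Hy).
    specialize (P2 ltac:(lia) ltac:(lia) Ht Ht Hy).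
    evar (l : R).
    assert (D : is_derive (fun t => q t t y + 2 * (y - t) * pd3 q t t y) t l).
    { apply isd_plus. exact D1.
      apply isd_mult. apply isd_scal. apply isd_minus.
      apply isd_const. apply isd_id. exact D2. }
    subst l. eapply isd_ext. 3: exact D. reflexivity. nra. }
  simpl in E. rewrite E. rewrite Hf by exact Hy. ring.
Qed.

Lemma bd1 (a b : Rbar) (f : R -> R) (q : R -> R -> R -> R)
  (Hq : smooth3 (fun u1 u2 u3 => in_interval a b u1 /\ in_interval a b u2 /\
                           in_interval a b u3) q)
  (HP : forall (i j : nat) (u1 u2 u3 : R),
     (1 <= i <= 3)%nat -> (1 <= j <= 3)%nat ->
     in_interval a b u1 -> in_interval a b u2 -> in_interval a b u3 ->
     2 * (coord i u1 u2 u3 - coord j u1 u2 u3) * pd i (pd j q) u1 u2 u3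
     = pd i q u1 u2 u3 - pd j q u1 u2 u3)
  (Hf : forall u, in_interval a b u -> q u u u = f u) x y : in_interval a b x -> in_interval a b y ->
  q x y y + 2 * (x - y) * pd1 q x y y = f x.
Proof.
  intros Hx Hy.
  assert (H3 : Ck3 2 (UJ a b) (pd1 q)) by (apply (Hq 3%nat)).
  assert (Hq2 : Ck3 2 (UJ a b) q) by apply Hq.
  assert (E : (fun t => q x t t + 2 * (x - t) * pd1 q x t t) y =
              (fun t => q x t t + 2 * (x - t) * pd1 q x t t) x).
  { apply (const_of_deriv0 a b (fun t => q x t t + 2 * (x - t) * pd1 q x t t) y x Hy Hx).
    intros t Ht.
    pose proof (diag23 a b q x t Hq2 Hx Ht) as D1.
    pose proof (diag23 a b (pd1 q) x t H3 Hx Ht) as D2.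
    pose proof (HP 2%nat 1%nat x t t) as P1. pose proof (HP 3%nat 1%nat x t t) as P2.
    simpl in P1, P2.
    specialize (P1 ltac:(lia) ltac:(lia) Hx Ht Ht).
    specialize (P2 ltac:(lia) ltac:(lia) Hx Ht Ht).
    evar (l : R).
    assert (D : is_derive (fun t => q x t t + 2 * (x - t) * pd1 q x t t) t l).
    { apply isd_plus. exact D1.
      apply isd_mult. apply isd_scal. apply isd_minus.
      apply isd_const. apply isd_id. exact D2. }
    subst l. eapply isd_ext. 3: exact D. reflexivity. nra. }
  simpl in E. rewrite E. rewrite Hf by exact Hx. ring.
Qed.

Definition Hn (n : nat) (x : R) := sqrt x / x ^ n.

Lemma isd_Hn (P : R -> R) (x dp : R) n : is_derive P x dp -> 0 < P x ->
  is_derive (fun t => Hn n (P t)) x (dp * ((/2 - INR n) * Hn (S n) (P x))).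
Proof.
  intros D Hp. unfold Hn.
  assert (Hs : 0 < sqrt (P x)) by (apply sqrt_lt_R0; auto).
  assert (Hpn : P x ^ n <> 0) by (apply pow_nonzero; lra).
  pose proof (is_derive_sqrt P x dp D Hp) as D1.
  pose proof (is_derive_pow P n x dp D) as D2.
  pose proof (is_derive_div _ _ x _ _ D1 D2 Hpn) as D3.
  eapply isd_ext. reflexivity. 2: exact D3.
  assert (E : sqrt (P x) * sqrt (P x) = P x) by (apply sqrt_sqrt; lra).
  cbv beta.
  set (s := sqrt (P x)) in *. clearbody s. rewrite <- E.
  destruct n as [|n].
  - change (INR 0) with 0. rewrite !pow_O. field. lra.
  - rewrite S_INR. change (Init.Nat.pred (S n)) with n.
    replace ((s*s) ^ S (S n)) with (s * s * ((s*s) ^ S n)) by (simpl; ring).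
    replace ((s*s) ^ S n) with (s * s * (s*s) ^ n) by (simpl; ring).
    assert (Hpn' : (s*s) ^ n <> 0) by (apply pow_nonzero; nra).
    field. split; auto; lra.
Qed.

Lemma isd_HH (P Q : R -> R) (x dp dq : R) n m :
  is_derive P x dp -> is_derive Q x dq -> 0 < P x -> 0 < Q x ->
  is_derive (fun t => Hn n (P t) * Hn m (Q t)) x
    (dp * (/2 - INR n) * Hn (S n) (P x) * Hn m (Q x)
     + dq * (/2 - INR m) * Hn n (P x) * Hn (S m) (Q x)).
Proof.
  intros DP DQ HP HQ.
  pose proof (isd_Hn P x dp n DP HP) as D1.
  pose proof (isd_Hn Q x dq m DQ HQ) as D2.
  eapply isd_ext. reflexivity. 2: exact (isd_mult _ _ _ _ _ D1 D2).
  cbv beta. ring.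
Qed.

Lemma cont_Hn n x : 0 < x -> continuity_pt (Hn n) x.
Proof.
  intros Hx. apply continuity_pt_filterlim.
  apply (ex_derive_continuous (K:=R_AbsRing) (V:=R_NormedModule)).
  exists (1 * ((/2 - INR n) * Hn (S n) x)).
  apply (isd_Hn (fun t => t) x 1 n); auto. apply isd_id.
Qed.

Lemma cont2_Hn (P : R -> R -> R) n y t : continuity_2d_pt P y t -> 0 < P y t ->
  continuity_2d_pt (fun a b => Hn n (P a b)) y t.
Proof.
  intros H Hp. apply continuity_1d_2d_pt_comp; auto. apply cont_Hn; auto.
Qed.

Lemma cont2_th (c : R -> R) y t : continuity_pt c t -> continuity_2d_pt (fun _ v => c v) y t.
Proof.
  intros H. apply (continuity_1d_2d_pt_comp c (fun _ v => v)); auto. apply continuity_2d_pt_id2.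
Qed.

Lemma cont2_aff A B C D y t :
  continuity_2d_pt (fun u v => A + B * u + (C + D * u) * sin v ^ 2) y t.
Proof.
  apply continuity_2d_pt_plus. apply continuity_2d_pt_plus.
  apply continuity_2d_pt_const. apply continuity_2d_pt_mult. apply continuity_2d_pt_const.
  apply continuity_2d_pt_id1.
  apply continuity_2d_pt_mult. apply continuity_2d_pt_plus. apply continuity_2d_pt_const.
  apply continuity_2d_pt_mult. apply continuity_2d_pt_const. apply continuity_2d_pt_id1.
  apply (cont2_th (fun v => sin v ^ 2)).
  apply continuity_pt_filterlim.
  apply (ex_derive_continuous (K:=R_AbsRing) (V:=R_NormedModule)). auto_derive. auto.
Qed.

Lemma cont2_1d (F : R -> R -> R) y t : continuity_2d_pt F y t -> continuous (F y) t.
Proof.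
  intros H. apply continuity_2d_pt_filterlim in H.
  apply (continuous_comp_2 (fun _ : R => y) (fun z : R => z) F).
  apply continuous_const. apply continuous_id. exact H.
Qed.

Lemma param (F dF : R -> R -> R) (x : R) :
  locally x (fun y => forall t, is_derive (fun z => F z t) y (dF y t)) ->
  (forall t, continuity_2d_pt dF x t) ->
  locally x (fun y => forall t, continuous (F y) t) ->
  is_derive (fun y => RInt (F y) 0 (PI/2)) x (RInt (dF x) 0 (PI/2)).
Proof.
  intros HD HC HF.
  assert (E : RInt (dF x) 0 (PI/2) = RInt (fun t => Derive (fun u => F u t) x) 0 (PI/2)).
  { apply RInt_ext. intros t _. symmetry. apply is_derive_unique.
    apply (locally_singleton _ _ HD). }
  rewrite E.
  apply (is_derive_RInt_param F 0 (PI/2) x).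
  - eapply filter_imp. 2: exact HD. intros y Hy t _. exists (dF y t). apply Hy.
  - intros t _. eapply continuity_2d_pt_ext_loc. 2: apply (HC t).
    destruct HD as [d Hd]. exists d. intros u v Hu _.
    symmetry. apply is_derive_unique. apply Hd. exact Hu.
  - eapply filter_imp. 2: exact HF. intros y Hy. apply (ex_RInt_continuous (V:=R_CompleteNormedModule)).
    intros z _. apply Hy.
Qed.
Definition pp nu u2 u3 t := nu + u3 + (u2 - u3) * sin t ^ 2.
Definition rr u1 u2 u3 t := u1 - u3 - (u2 - u3) * sin t ^ 2.
Definition HH nu u1 u2 u3 n m t := Hn n (pp nu u2 u3 t) * Hn m (rr u1 u2 u3 t).
Definition Sx t := sin t ^ 2.
Definition Reg nu u1 u2 u3 := - nu < u3 /\ u3 < u2 /\ u2 < u1.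

Definition GG nu u1 u2 u3 t := 2 * HH nu u1 u2 u3 0 1 t.
Definition G1 nu u1 u2 u3 t := - HH nu u1 u2 u3 0 2 t.
Definition MM nu u1 u2 u3 t := HH nu u1 u2 u3 1 1 t + HH nu u1 u2 u3 0 2 t.
Definition G2 nu u1 u2 u3 t := Sx t * MM nu u1 u2 u3 t.
Definition G3 nu u1 u2 u3 t := (1 - Sx t) * MM nu u1 u2 u3 t.
Definition LL nu u1 u2 u3 t := /2 * HH nu u1 u2 u3 1 2 t + 3/2 * HH nu u1 u2 u3 0 3 t.
Definition G12 nu u1 u2 u3 t := - (Sx t * LL nu u1 u2 u3 t).
Definition G13 nu u1 u2 u3 t := - ((1 - Sx t) * LL nu u1 u2 u3 t).
Definition NN nu u1 u2 u3 t := - /2 * HH nu u1 u2 u3 2 1 t + HH nu u1 u2 u3 1 2 t + 3/2 * HH nu u1 u2 u3 0 3 t.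
Definition G23 nu u1 u2 u3 t := Sx t * (1 - Sx t) * NN nu u1 u2 u3 t.

Lemma Sx_bnd t : 0 <= Sx t <= 1.
Proof.
  unfold Sx. pose proof (sin2_cos2 t). unfold Rsqr in H.
  split. nra. nra.
Qed.

Lemma pp_pos nu u1 u2 u3 t : Reg nu u1 u2 u3 -> 0 < pp nu u2 u3 t.
Proof. intros [H1 [H2 H3]]. unfold pp. pose proof (Sx_bnd t). unfold Sx in H. nra. Qed.
Lemma rr_pos nu u1 u2 u3 t : Reg nu u1 u2 u3 -> 0 < rr u1 u2 u3 t.
Proof. intros [H1 [H2 H3]]. unfold rr. pose proof (Sx_bnd t). unfold Sx in H. nra. Qed.

Lemma Reg_loc1 nu u1 u2 u3 : Reg nu u1 u2 u3 -> locally u1 (fun y => Reg nu y u2 u3).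
Proof.
  intros [H1 [H2 H3]]. exists (mkposreal (u1 - u2) ltac:(lra)). intros y Hy.
  change (Rabs (y - u1) < u1 - u2) in Hy. apply Rabs_def2 in Hy. unfold Reg. lra.
Qed.
Lemma Reg_loc2 nu u1 u2 u3 : Reg nu u1 u2 u3 -> locally u2 (fun y => Reg nu u1 y u3).
Proof.
  intros [H1 [H2 H3]]. exists (mkposreal (Rmin (u1 - u2) (u2 - u3)) ltac:(apply Rmin_pos; lra)). intros y Hy.
  change (Rabs (y - u2) < Rmin (u1 - u2) (u2 - u3)) in Hy. apply Rabs_def2 in Hy.
  pose proof (Rmin_l (u1 - u2) (u2 - u3)). pose proof (Rmin_r (u1 - u2) (u2 - u3)). unfold Reg. lra.
Qed.
Lemma Reg_loc3 nu u1 u2 u3 : Reg nu u1 u2 u3 -> locally u3 (fun y => Reg nu u1 u2 y).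
Proof.
  intros [H1 [H2 H3]]. exists (mkposreal (Rmin (u3 + nu) (u2 - u3)) ltac:(apply Rmin_pos; lra)). intros y Hy.
  change (Rabs (y - u3) < Rmin (u3 + nu) (u2 - u3)) in Hy. apply Rabs_def2 in Hy.
  pose proof (Rmin_l (u3 + nu) (u2 - u3)). pose proof (Rmin_r (u3 + nu) (u2 - u3)). unfold Reg. lra.
Qed.

Lemma dHH1 nu u1 u2 u3 n m t : Reg nu u1 u2 u3 ->
  is_derive (fun y => HH nu y u2 u3 n m t) u1 ((/2 - INR m) * HH nu u1 u2 u3 n (S m) t).
Proof.
  intros HR. unfold HH.
  eapply isd_ext. reflexivity. 2: apply (isd_HH (fun _ => pp nu u2 u3 t) (fun y => rr y u2 u3 t) u1 0 1).
  ring. apply isd_const. unfold rr. auto_derive; auto; ring.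
  eapply pp_pos; eauto. eapply rr_pos; eauto.
Qed.
Lemma dHH2 nu u1 u2 u3 n m t : Reg nu u1 u2 u3 ->
  is_derive (fun y => HH nu u1 y u3 n m t) u2
    (Sx t * ((/2 - INR n) * HH nu u1 u2 u3 (S n) m t - (/2 - INR m) * HH nu u1 u2 u3 n (S m) t)).
Proof.
  intros HR. unfold HH.
  eapply isd_ext. reflexivity. 2: apply (isd_HH (fun y => pp nu y u3 t) (fun y => rr u1 y u3 t) u2 (Sx t) (- Sx t)).
  ring. unfold pp, Sx. auto_derive; auto; ring. unfold rr, Sx. auto_derive; auto; ring.
  eapply pp_pos; eauto. eapply rr_pos; eauto.
Qed.
Lemma dHH3 nu u1 u2 u3 n m t : Reg nu u1 u2 u3 ->
  is_derive (fun y => HH nu u1 u2 y n m t) u3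
    ((1 - Sx t) * ((/2 - INR n) * HH nu u1 u2 u3 (S n) m t - (/2 - INR m) * HH nu u1 u2 u3 n (S m) t)).
Proof.
  intros HR. unfold HH.
  eapply isd_ext. reflexivity. 2: apply (isd_HH (fun y => pp nu u2 y t) (fun y => rr u1 u2 y t) u3 (1 - Sx t) (- (1 - Sx t))).
  ring. unfold pp, Sx. auto_derive; auto; ring. unfold rr, Sx. auto_derive; auto; ring.
  eapply pp_pos; eauto. eapply rr_pos; eauto.
Qed.

Lemma cont2_Sx y t : continuity_2d_pt (fun _ v => Sx v) y t.
Proof.
  apply cont2_th. apply continuity_pt_filterlim.
  apply (ex_derive_continuous (K:=R_AbsRing) (V:=R_NormedModule)). unfold Sx. auto_derive. auto.
Qed.

Lemma cont2_HH1 nu u1 u2 u3 n m t : Reg nu u1 u2 u3 ->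
  continuity_2d_pt (fun y v => HH nu y u2 u3 n m v) u1 t.
Proof.
  intros HR. unfold HH. apply continuity_2d_pt_mult.
  - apply (cont2_Hn (fun y v => pp nu u2 u3 v)). 2: eapply pp_pos; eauto.
    eapply continuity_2d_pt_ext. 2: apply (cont2_aff (nu + u3) 0 (u2 - u3) 0).
    intros; simpl; unfold pp; ring.
  - apply (cont2_Hn (fun y v => rr y u2 u3 v)). 2: eapply rr_pos; eauto.
    eapply continuity_2d_pt_ext. 2: apply (cont2_aff (- u3) 1 (- (u2 - u3)) 0).
    intros; simpl; unfold rr; ring.
Qed.
Lemma cont2_HH2 nu u1 u2 u3 n m t : Reg nu u1 u2 u3 ->
  continuity_2d_pt (fun y v => HH nu u1 y u3 n m v) u2 t.
Proof.
  intros HR. unfold HH. apply continuity_2d_pt_mult.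
  - apply (cont2_Hn (fun y v => pp nu y u3 v)). 2: eapply pp_pos; eauto.
    eapply continuity_2d_pt_ext. 2: apply (cont2_aff (nu + u3) 0 (- u3) 1).
    intros; simpl; unfold pp; ring.
  - apply (cont2_Hn (fun y v => rr u1 y u3 v)). 2: eapply rr_pos; eauto.
    eapply continuity_2d_pt_ext. 2: apply (cont2_aff (u1 - u3) 0 u3 (-1)).
    intros; simpl; unfold rr; ring.
Qed.
Lemma cont2_HH3 nu u1 u2 u3 n m t : Reg nu u1 u2 u3 ->
  continuity_2d_pt (fun y v => HH nu u1 u2 y n m v) u3 t.
Proof.
  intros HR. unfold HH. apply continuity_2d_pt_mult.
  - apply (cont2_Hn (fun y v => pp nu u2 y v)). 2: eapply pp_pos; eauto.
    eapply continuity_2d_pt_ext. 2: apply (cont2_aff nu 1 u2 (-1)).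
    intros; simpl; unfold pp; ring.
  - apply (cont2_Hn (fun y v => rr u1 u2 y v)). 2: eapply rr_pos; eauto.
    eapply continuity_2d_pt_ext. 2: apply (cont2_aff u1 (-1) (- u2) 1).
    intros; simpl; unfold rr; ring.
Qed.

Ltac cont2_tac :=
  repeat (match goal with
  | |- continuity_2d_pt (fun _ _ => - _) _ _ => apply continuity_2d_pt_opp
  | |- continuity_2d_pt (fun _ _ => _ + _) _ _ => apply continuity_2d_pt_plus
  | |- continuity_2d_pt (fun _ _ => _ - _) _ _ => apply continuity_2d_pt_minus
  | |- continuity_2d_pt (fun _ _ => _ * _) _ _ => apply continuity_2d_pt_mult
  | |- continuity_2d_pt (fun _ v => Sx v) _ _ => apply cont2_Sx
  | |- continuity_2d_pt (fun y v => HH _ y _ _ _ _ v) _ _ => apply cont2_HH1; assumption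
  | |- continuity_2d_pt (fun y v => HH _ _ y _ _ _ v) _ _ => apply cont2_HH2; assumption
  | |- continuity_2d_pt (fun y v => HH _ _ _ y _ _ v) _ _ => apply cont2_HH3; assumption
  | |- continuity_2d_pt (fun _ _ => _) _ _ => apply continuity_2d_pt_const
  end).

Definition Jint (G : R -> R -> R -> R -> R -> R) nu u1 u2 u3 := RInt (G nu u1 u2 u3) 0 (PI/2).

Ltac inr_simpl := rewrite ?S_INR, ?INR_0.

Lemma isd_opp (f : R -> R) (x df : R) : is_derive f x df -> is_derive (fun t => - f t) x (- df).
Proof. intros. apply (is_derive_opp f x df); auto. Qed.

Ltac dstep :=
  match goal with
  | |- is_derive (fun _ => - _) _ _ => apply isd_opp
  | |- is_derive (fun _ => _ + _) _ _ => apply isd_plus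
  | |- is_derive (fun y => HH _ y _ _ _ _ _) _ _ => apply dHH1; assumption
  | |- is_derive (fun y => HH _ _ y _ _ _ _) _ _ => apply dHH2; assumption
  | |- is_derive (fun y => HH _ _ _ y _ _ _) _ _ => apply dHH3; assumption
  | |- is_derive (fun _ => _ * _) _ _ => apply isd_scal
  end.

Ltac dJ_tac F dF locl :=
  intros HR;
  apply (param F dF); [
    eapply filter_imp; [ | apply locl; exact HR ]; intros y Hy t;
    cbv beta; unfold GG, G1, G2, G3, MM, G12, G13, LL, G23, NN;
    eapply isd_ext; [ intros ?; reflexivity | | repeat dstep ];
    inr_simpl; field
  | intros t; unfold GG, G1, G2, G3, MM, G12, G13, LL, G23, NN; cont2_tac
  | eapply filter_imp; [ | apply locl; exact HR ]; intros y Hy t; apply cont2_1d;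
    unfold GG, G1, G2, G3, MM, G12, G13, LL, G23, NN; cont2_tac ].

Lemma dJ0_1 nu u1 u2 u3 : Reg nu u1 u2 u3 ->
  is_derive (fun y => Jint GG nu y u2 u3) u1 (Jint G1 nu u1 u2 u3).
Proof. dJ_tac (fun y t => GG nu y u2 u3 t) (fun y t => G1 nu y u2 u3 t) Reg_loc1. Qed.
Lemma dJ0_2 nu u1 u2 u3 : Reg nu u1 u2 u3 ->
  is_derive (fun y => Jint GG nu u1 y u3) u2 (Jint G2 nu u1 u2 u3).
Proof. dJ_tac (fun y t => GG nu u1 y u3 t) (fun y t => G2 nu u1 y u3 t) Reg_loc2. Qed.
Lemma dJ0_3 nu u1 u2 u3 : Reg nu u1 u2 u3 ->
  is_derive (fun y => Jint GG nu u1 u2 y) u3 (Jint G3 nu u1 u2 u3).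
Proof. dJ_tac (fun y t => GG nu u1 u2 y t) (fun y t => G3 nu u1 u2 y t) Reg_loc3. Qed.
Lemma dJ1_2 nu u1 u2 u3 : Reg nu u1 u2 u3 ->
  is_derive (fun y => Jint G1 nu u1 y u3) u2 (Jint G12 nu u1 u2 u3).
Proof. dJ_tac (fun y t => G1 nu u1 y u3 t) (fun y t => G12 nu u1 y u3 t) Reg_loc2. Qed.
Lemma dJ1_3 nu u1 u2 u3 : Reg nu u1 u2 u3 ->
  is_derive (fun y => Jint G1 nu u1 u2 y) u3 (Jint G13 nu u1 u2 u3).
Proof. dJ_tac (fun y t => G1 nu u1 u2 y t) (fun y t => G13 nu u1 u2 y t) Reg_loc3. Qed.
Lemma dJ2_1 nu u1 u2 u3 : Reg nu u1 u2 u3 ->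
  is_derive (fun y => Jint G2 nu y u2 u3) u1 (Jint G12 nu u1 u2 u3).
Proof. dJ_tac (fun y t => G2 nu y u2 u3 t) (fun y t => G12 nu y u2 u3 t) Reg_loc1. Qed.
Lemma dJ2_3 nu u1 u2 u3 : Reg nu u1 u2 u3 ->
  is_derive (fun y => Jint G2 nu u1 u2 y) u3 (Jint G23 nu u1 u2 u3).
Proof. dJ_tac (fun y t => G2 nu u1 u2 y t) (fun y t => G23 nu u1 u2 y t) Reg_loc3. Qed.
Lemma dJ3_1 nu u1 u2 u3 : Reg nu u1 u2 u3 ->
  is_derive (fun y => Jint G3 nu y u2 u3) u1 (Jint G13 nu u1 u2 u3).
Proof. dJ_tac (fun y t => G3 nu y u2 u3 t) (fun y t => G13 nu y u2 u3 t) Reg_loc1. Qed.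
Lemma dJ3_2 nu u1 u2 u3 : Reg nu u1 u2 u3 ->
  is_derive (fun y => Jint G3 nu u1 y u3) u2 (Jint G23 nu u1 u2 u3).
Proof. dJ_tac (fun y t => G3 nu u1 y u3 t) (fun y t => G23 nu u1 y u3 t) Reg_loc2. Qed.

Lemma ibp_gen (A B C H : R -> R) (k : R) :
  (forall t, is_derive H t (A t - k * (B t - C t))) ->
  (forall t, continuous A t) -> (forall t, continuous B t) -> (forall t, continuous C t) ->
  H 0 = 0 -> H (PI/2) = 0 ->
  RInt A 0 (PI/2) = k * (RInt B 0 (PI/2) - RInt C 0 (PI/2)).
Proof.
  intros HD cA cB cC H0 H1.
  assert (eA : ex_RInt A 0 (PI/2)) by (apply (ex_RInt_continuous (V:=R_CompleteNormedModule)); auto).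
  assert (eB : ex_RInt B 0 (PI/2)) by (apply (ex_RInt_continuous (V:=R_CompleteNormedModule)); auto).
  assert (eC : ex_RInt C 0 (PI/2)) by (apply (ex_RInt_continuous (V:=R_CompleteNormedModule)); auto).
  assert (I : is_RInt (fun t => A t - k * (B t - C t)) 0 (PI/2) (minus (H (PI/2)) (H 0))).
  { apply (is_RInt_derive (V:=R_CompleteNormedModule) H). intros; apply HD.
    intros t _. apply (continuous_minus (K:=R_AbsRing) (V:=R_NormedModule)). auto.
    apply (continuous_scal_r (K:=R_AbsRing) (V:=R_NormedModule) k (fun t => B t - C t)).
    apply (continuous_minus (K:=R_AbsRing) (V:=R_NormedModule)); auto. }
  rewrite H0, H1 in I. apply (is_RInt_unique (V:=R_CompleteNormedModule)) in I.
  rewrite (RInt_minus (V:=R_CompleteNormedModule) A (fun t => k * (B t - C t))) in I; auto.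
  2: { apply (ex_RInt_scal (V:=R_CompleteNormedModule) (fun t => B t - C t)).
       apply (ex_RInt_minus (V:=R_CompleteNormedModule)); auto. }
  rewrite (RInt_scal (V:=R_CompleteNormedModule) (fun t => B t - C t)) in I.
  2: apply (ex_RInt_minus (V:=R_CompleteNormedModule)); auto.
  rewrite (RInt_minus (V:=R_CompleteNormedModule) B C) in I; auto.
  unfold minus, plus, opp, scal in I. simpl in I. unfold mult in I. simpl in I.
  unfold zero in I. simpl in I. lra.
Qed.

Lemma dHHt nu u1 u2 u3 n m t : Reg nu u1 u2 u3 ->
  is_derive (fun t => HH nu u1 u2 u3 n m t) t
    ((u2 - u3) * (2 * (sin t * cos t)) *
     ((/2 - INR n) * HH nu u1 u2 u3 (S n) m t - (/2 - INR m) * HH nu u1 u2 u3 n (S m) t)).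
Proof.
  intros HR. unfold HH.
  eapply isd_ext. reflexivity. 2: apply (isd_HH (fun t => pp nu u2 u3 t) (fun t => rr u1 u2 u3 t) t
     ((u2 - u3) * (2 * (sin t * cos t))) (- ((u2 - u3) * (2 * (sin t * cos t))))).
  ring. unfold pp. auto_derive; auto; ring. unfold rr. auto_derive; auto; ring.
  eapply pp_pos; eauto. eapply rr_pos; eauto.
Qed.

Lemma dsc t : is_derive (fun t => sin t * cos t) t (1 - 2 * Sx t).
Proof.
  auto_derive; auto. unfold Sx. pose proof (sin2_cos2 t). unfold Rsqr in H. nra.
Qed.

Lemma sc2 t : (sin t * cos t) ^ 2 = Sx t * (1 - Sx t).
Proof. unfold Sx. pose proof (sin2_cos2 t). unfold Rsqr in H. nra. Qed.

Ltac contG_tac :=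
  match goal with
  | |- continuous (?G ?nu ?u1 ?u2 ?u3) ?t =>
    apply (cont2_1d (fun y v => G nu y u2 u3 v) u1 t);
    unfold GG, G1, G2, G3, MM, G12, G13, LL, G23, NN; cont2_tac
  end.

Lemma E23 nu u1 u2 u3 : Reg nu u1 u2 u3 ->
  Jint G23 nu u1 u2 u3 = / (2 * (u2 - u3)) * (Jint G2 nu u1 u2 u3 - Jint G3 nu u1 u2 u3).
Proof.
  intros HR. pose proof HR as [H1 [H2 H3]].
  apply (ibp_gen _ _ _ (fun t => sin t * cos t * (/ (2 * (u2 - u3)) * MM nu u1 u2 u3 t))).
  - intros t. eapply isd_ext. reflexivity. 2: apply isd_mult. 2: apply dsc.
    2: apply isd_scal; unfold MM; apply isd_plus; apply dHHt; exact HR.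
    cbv beta. unfold G23, G2, G3, NN, MM. inr_simpl.
    pose proof (sc2 t) as E. set (sc := sin t * cos t) in *. clearbody sc.
    ring_simplify. rewrite E. field. lra.
  - intros t; contG_tac.
  - intros t; contG_tac.
  - intros t; contG_tac.
  - rewrite sin_0. ring.
  - rewrite cos_PI2. ring.
Qed.

Lemma E12 nu u1 u2 u3 : Reg nu u1 u2 u3 ->
  Jint G12 nu u1 u2 u3 = / (2 * (u1 - u2)) * (Jint G1 nu u1 u2 u3 - Jint G2 nu u1 u2 u3).
Proof.
  intros HR. pose proof HR as [H1 [H2 H3]].
  apply (ibp_gen _ _ _ (fun t => sin t * cos t * (/ (2 * (u1 - u2)) * HH nu u1 u2 u3 0 2 t))).
  - intros t. eapply isd_ext. reflexivity. 2: apply isd_mult. 2: apply dsc.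
    2: apply isd_scal; apply dHHt; exact HR.
    cbv beta. unfold G12, G1, G2, LL, MM. inr_simpl.
    pose proof (sc2 t) as E. set (sc := sin t * cos t) in *. clearbody sc.
    ring_simplify. rewrite E. unfold HH, Hn, Sx.
    pose proof (pp_pos nu u1 u2 u3 t HR). pose proof (rr_pos nu u1 u2 u3 t HR).
    unfold pp, rr in *. field. lra.
  - intros t; contG_tac.
  - intros t; contG_tac.
  - intros t; contG_tac.
  - rewrite sin_0. ring.
  - rewrite cos_PI2. ring.
Qed.

Lemma E13 nu u1 u2 u3 : Reg nu u1 u2 u3 ->
  Jint G13 nu u1 u2 u3 = / (2 * (u1 - u3)) * (Jint G1 nu u1 u2 u3 - Jint G3 nu u1 u2 u3).
Proof.
  intros HR. pose proof HR as [H1 [H2 H3]].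
  apply (ibp_gen _ _ _ (fun t => sin t * cos t * (- / (2 * (u1 - u3)) * HH nu u1 u2 u3 0 2 t))).
  - intros t. eapply isd_ext. reflexivity. 2: apply isd_mult. 2: apply dsc.
    2: apply isd_scal; apply dHHt; exact HR.
    cbv beta. unfold G13, G1, G3, LL, MM. inr_simpl.
    pose proof (sc2 t) as E. set (sc := sin t * cos t) in *. clearbody sc.
    ring_simplify. rewrite E. unfold HH, Hn, Sx.
    pose proof (pp_pos nu u1 u2 u3 t HR). pose proof (rr_pos nu u1 u2 u3 t HR).
    unfold pp, rr in *. field. lra.
  - intros t; contG_tac.
  - intros t; contG_tac.
  - intros t; contG_tac.
  - rewrite sin_0. ring.
  - rewrite cos_PI2. ring.
Qed.

Lemma Hn_pos n x : 0 < x -> 0 < Hn n x.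
Proof. intros. unfold Hn. apply Rdiv_lt_0_compat. apply sqrt_lt_R0; auto. apply pow_lt; auto. Qed.

Lemma HH_pos nu u1 u2 u3 n m t : Reg nu u1 u2 u3 -> 0 < HH nu u1 u2 u3 n m t.
Proof. intros HR. unfold HH. apply Rmult_lt_0_compat; apply Hn_pos; [eapply pp_pos|eapply rr_pos]; eauto. Qed.

Lemma RInt_pos_gen (A : R -> R) : (forall t, continuous A t) -> (forall t, 0 < t < PI/2 -> 0 < A t) ->
  0 < RInt A 0 (PI/2).
Proof.
  intros cA pA.
  assert (E : RInt (fun _ => 0) 0 (PI/2) = 0).
  { rewrite RInt_const. unfold scal; simpl; unfold mult; simpl. ring. }
  rewrite <- E at 1. apply RInt_lt. pose proof PI_RGT_0. lra.
  intros; auto. intros; apply continuous_const. intros; auto.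
Qed.

Lemma sin_pos t : 0 < t < PI/2 -> 0 < Sx t.
Proof. intros H. unfold Sx. pose proof (sin_gt_0 t ltac:(lra) ltac:(pose proof PI_RGT_0; lra)). nra. Qed.
Lemma cos_pos t : 0 < t < PI/2 -> 0 < 1 - Sx t.
Proof.
  intros H. unfold Sx. pose proof (cos_gt_0 t ltac:(pose proof PI_RGT_0; lra) ltac:(lra)).
  pose proof (sin2_cos2 t). unfold Rsqr in H1. nra.
Qed.

Lemma J0_pos nu u1 u2 u3 : Reg nu u1 u2 u3 -> 0 < Jint GG nu u1 u2 u3.
Proof.
  intros HR. pose proof HR as [H1 [H2 H3]]. apply RInt_pos_gen. intros t; contG_tac.
  intros t Ht. unfold GG. pose proof (HH_pos nu u1 u2 u3 0 1 t HR). lra.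
Qed.
Lemma J1_neg nu u1 u2 u3 : Reg nu u1 u2 u3 -> Jint G1 nu u1 u2 u3 < 0.
Proof.
  intros HR. pose proof HR as [H1 [H2 H3]].
  assert (E : Jint G1 nu u1 u2 u3 = - RInt (fun t => HH nu u1 u2 u3 0 2 t) 0 (PI/2)).
  { unfold Jint, G1. rewrite <- (RInt_opp (V:=R_CompleteNormedModule)). reflexivity.
    apply (ex_RInt_continuous (V:=R_CompleteNormedModule)). intros z _.
    apply (cont2_1d (fun y v => HH nu y u2 u3 0 2 v) u1 z); cont2_tac. }
  rewrite E. apply Ropp_lt_gt_0_contravar. apply RInt_pos_gen.
  intros t. apply (cont2_1d (fun y v => HH nu y u2 u3 0 2 v) u1 t); cont2_tac.
  intros t Ht. apply HH_pos; auto.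
Qed.
Lemma J2_pos nu u1 u2 u3 : Reg nu u1 u2 u3 -> 0 < Jint G2 nu u1 u2 u3.
Proof.
  intros HR. pose proof HR as [H1 [H2 H3]]. apply RInt_pos_gen. intros t; contG_tac.
  intros t Ht. unfold G2, MM. pose proof (HH_pos nu u1 u2 u3 1 1 t HR).
  pose proof (HH_pos nu u1 u2 u3 0 2 t HR). pose proof (sin_pos t Ht). nra.
Qed.
Lemma J3_pos nu u1 u2 u3 : Reg nu u1 u2 u3 -> 0 < Jint G3 nu u1 u2 u3.
Proof.
  intros HR. pose proof HR as [H1 [H2 H3]]. apply RInt_pos_gen. intros t; contG_tac.
  intros t Ht. unfold G3, MM. pose proof (HH_pos nu u1 u2 u3 1 1 t HR).
  pose proof (HH_pos nu u1 u2 u3 0 2 t HR). pose proof (cos_pos t Ht). nra.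
Qed.

Lemma asin_nonneg z : 0 <= z <= 1 -> 0 <= asin z.
Proof.
  intros Hz. destruct (Rle_or_lt 0 (asin z)) as [H|H]; auto.
  pose proof (asin_bound z) as [B1 B2].
  assert (sin (asin z) < 0).
  { destruct (Req_dec (asin z) (- (PI/2))) as [E|E].
    - rewrite E, sin_neg, sin_PI2. lra.
    - apply sin_lt_0_var; lra. }
  rewrite sin_asin in H0 by lra. lra.
Qed.

Lemma asin_compl s : 0 <= s <= 1 -> asin (sqrt s) = PI/2 - asin (sqrt (1 - s)).
Proof.
  intros Hs.
  assert (Hz : 0 <= sqrt (1 - s) <= 1).
  { split. apply sqrt_pos. apply Rle_trans with (sqrt 1); [apply sqrt_le_1_alt; lra | rewrite sqrt_1; lra]. }
  pose proof (asin_nonneg _ Hz). pose proof (asin_bound (sqrt (1 - s))) as [B1 B2]. pose proof PI_RGT_0.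
  rewrite <- (asin_sin (PI/2 - asin (sqrt (1 - s)))) by lra.
  f_equal. rewrite sin_shift, cos_asin by lra.
  rewrite Rsqr_sqrt by lra. f_equal. ring.
Qed.

Lemma asin_deriv z : -1 < z < 1 -> is_derive asin z (1 / sqrt (1 - z ^ 2)).
Proof.
  intros Hz. apply is_derive_Reals.
  apply (derive_pt_eq asin z _ (derivable_pt_asin z Hz)).
  rewrite derive_pt_asin. unfold Rsqr. f_equal. f_equal. ring.
Qed.

Lemma asin_cont0 : continuity_pt asin 0.
Proof.
  apply continuity_pt_filterlim.
  apply (ex_derive_continuous (K:=R_AbsRing) (V:=R_NormedModule)).
  eexists. apply asin_deriv. lra.
Qed.

Definition fI nu u1 u2 u3 x := (x + nu) / sqrt ((x + nu) * (u1 - x) * (u2 - x) * (x - u3)).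
Definition sArg u2 u3 x := (x - u3) / (u2 - u3).
Definition Tm u2 u3 x := asin (sqrt (sArg u2 u3 x)).
Definition Phi nu u1 u2 u3 x := RInt (GG nu u1 u2 u3) 0 (Tm u2 u3 x).

Lemma GG_cont nu u1 u2 u3 t : Reg nu u1 u2 u3 -> continuous (GG nu u1 u2 u3) t.
Proof. intros HR. pose proof HR as [H1 [H2 H3]]. contG_tac. Qed.

Lemma dRInt0 nu u1 u2 u3 z : Reg nu u1 u2 u3 ->
  is_derive (fun y => RInt (GG nu u1 u2 u3) 0 y) z (GG nu u1 u2 u3 z).
Proof.
  intros HR. apply (is_derive_RInt (V:=R_NormedModule) (GG nu u1 u2 u3) (fun y => RInt (GG nu u1 u2 u3) 0 y) 0 z).
  - apply filter_forall. intros y. apply (RInt_correct (V:=R_CompleteNormedModule)).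
    apply (ex_RInt_continuous (V:=R_CompleteNormedModule)). intros; apply GG_cont; auto.
  - apply GG_cont; auto.
Qed.

Lemma dPhi nu u1 u2 u3 x : Reg nu u1 u2 u3 -> u3 < x < u2 ->
  is_derive (Phi nu u1 u2 u3) x (fI nu u1 u2 u3 x).
Proof.
  intros HR Hx. pose proof HR as [H1 [H2 H3]].
  assert (Hs : 0 < sArg u2 u3 x < 1).
  { unfold sArg. split. apply Rdiv_lt_0_compat; lra.
    apply (Rmult_lt_reg_r (u2 - u3)). lra. field_simplify; lra. }
  set (s := sArg u2 u3 x) in *.
  assert (Hz : 0 < sqrt s < 1).
  { split. apply sqrt_lt_R0; lra. rewrite <- sqrt_1. apply sqrt_lt_1_alt; lra. }
  assert (D1 : is_derive (sArg u2 u3) x (/ (u2 - u3))).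
  { unfold sArg. auto_derive. lra. field. lra. }
  pose proof (is_derive_sqrt _ _ _ D1 ltac:(exact (proj1 Hs))) as D2.
  pose proof (asin_deriv (sqrt s) ltac:(lra)) as D3.
  pose proof (isd_comp asin (fun y => sqrt (sArg u2 u3 y)) x _ _ D3 D2) as D4.
  pose proof (dRInt0 nu u1 u2 u3 (Tm u2 u3 x) HR) as D5.
  pose proof (isd_comp _ (Tm u2 u3) x _ _ D5 D4) as D6.
  unfold Phi. eapply isd_ext. reflexivity. 2: exact D6.
  unfold GG, HH, Hn, pp, rr, Tm. fold s. rewrite sin_asin by lra.
  rewrite <- Rsqr_pow2, Rsqr_sqrt by lra.
  assert (Ep : nu + u3 + (u2 - u3) * s = x + nu) by (unfold s, sArg; field; lra).
  assert (Er : u1 - u3 - (u2 - u3) * s = u1 - x) by (unfold s, sArg; field; lra).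
  rewrite Ep, Er.
  assert (Es : sqrt s = sqrt (x - u3) / sqrt (u2 - u3)) by (unfold s, sArg; apply sqrt_div_alt; lra).
  assert (Es' : sqrt (1 - s) = sqrt (u2 - x) / sqrt (u2 - u3)).
  { rewrite <- sqrt_div_alt by lra. f_equal. unfold s, sArg. field. lra. }
  rewrite Es, Es'. unfold fI.
  rewrite (sqrt_mult_alt ((x + nu) * (u1 - x) * (u2 - x))) by (repeat apply Rmult_le_pos; lra).
  rewrite (sqrt_mult_alt ((x + nu) * (u1 - x))) by (repeat apply Rmult_le_pos; lra).
  rewrite (sqrt_mult_alt (x + nu)) by lra.
  assert (EA : sqrt (x + nu) * sqrt (x + nu) = x + nu) by (apply sqrt_sqrt; lra).
  assert (EB : sqrt (u1 - x) * sqrt (u1 - x) = u1 - x) by (apply sqrt_sqrt; lra).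
  assert (EE : sqrt (u2 - u3) * sqrt (u2 - u3) = u2 - u3) by (apply sqrt_sqrt; lra).
  assert (PA : 0 < sqrt (x + nu)) by (apply sqrt_lt_R0; lra).
  assert (PB : 0 < sqrt (u1 - x)) by (apply sqrt_lt_R0; lra).
  assert (PC : 0 < sqrt (u2 - x)) by (apply sqrt_lt_R0; lra).
  assert (PD : 0 < sqrt (x - u3)) by (apply sqrt_lt_R0; lra).
  assert (PE : 0 < sqrt (u2 - u3)) by (apply sqrt_lt_R0; lra).
  set (A := sqrt (x + nu)) in *. set (B := sqrt (u1 - x)) in *. set (C := sqrt (u2 - x)) in *.
  set (D := sqrt (x - u3)) in *. set (E := sqrt (u2 - u3)) in *.
  clearbody A B C D E.
  rewrite <- EA, <- EB, <- EE. field. repeat split; lra.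
Qed.

Definition sArg2 u2 u3 x := (u2 - x) / (u2 - u3).
Definition Phi2 nu u1 u2 u3 x := RInt (GG nu u1 u2 u3) 0 (PI/2 - asin (sqrt (sArg2 u2 u3 x))).

Lemma contR nu u1 u2 u3 z : Reg nu u1 u2 u3 -> continuous (fun y => RInt (GG nu u1 u2 u3) 0 y) z.
Proof.
  intros HR. apply (ex_derive_continuous (K:=R_AbsRing) (V:=R_NormedModule)).
  eexists. apply dRInt0; auto.
Qed.

Lemma cont_asin_sqrt (g : R -> R) x : continuous g x -> g x = 0 ->
  continuous (fun y => asin (sqrt (g y))) x.
Proof.
  intros Hg E.
  apply (continuous_comp (fun y => sqrt (g y)) asin).
  - apply (continuous_comp g sqrt). auto. rewrite E.
    apply continuity_pt_filterlim. apply continuity_pt_sqrt. lra.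
  - rewrite E, sqrt_0. apply continuity_pt_filterlim. apply asin_cont0.
Qed.

Lemma Phi_lim3 nu u1 u2 u3 : Reg nu u1 u2 u3 ->
  filterlim (Phi nu u1 u2 u3) (at_right u3) (locally 0).
Proof.
  intros HR. pose proof HR as [H1 [H2 H3]].
  apply (filterlim_filter_le_1 (F := locally u3)). apply filter_le_within.
  assert (E : Phi nu u1 u2 u3 u3 = 0).
  { unfold Phi, Tm, sArg. replace ((u3 - u3) / (u2 - u3)) with 0 by (field; lra).
    rewrite sqrt_0, asin_0. apply (RInt_point (V:=R_CompleteNormedModule)). }
  replace (locally 0) with (locally (Phi nu u1 u2 u3 u3)) by (rewrite E; reflexivity).
  apply (continuous_comp (Tm u2 u3) (fun y => RInt (GG nu u1 u2 u3) 0 y)).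
  - apply cont_asin_sqrt. apply (ex_derive_continuous (K:=R_AbsRing) (V:=R_NormedModule)).
    unfold sArg. auto_derive. lra. unfold sArg. field. lra.
  - apply contR; auto.
Qed.

Lemma Phi_lim2 nu u1 u2 u3 : Reg nu u1 u2 u3 ->
  filterlim (Phi nu u1 u2 u3) (at_left u2) (locally (Jint GG nu u1 u2 u3)).
Proof.
  intros HR. pose proof HR as [H1 [H2 H3]].
  apply (filterlim_ext_loc (Phi2 nu u1 u2 u3)).
  { exists (mkposreal (u2 - u3) ltac:(lra)). intros y Hy Hy2.
    change (Rabs (y - u2) < u2 - u3) in Hy. apply Rabs_def2 in Hy.
    unfold Phi2, Phi, Tm. f_equal.
    rewrite (asin_compl (sArg u2 u3 y)). f_equal. f_equal. f_equal.
    unfold sArg, sArg2. field. lra.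
    unfold sArg. split. apply Rdiv_le_0_compat; lra.
    apply (Rmult_le_reg_r (u2 - u3)). lra. field_simplify; lra. }
  apply (filterlim_filter_le_1 (F := locally u2)). apply filter_le_within.
  assert (E : Phi2 nu u1 u2 u3 u2 = Jint GG nu u1 u2 u3).
  { unfold Phi2, Jint, sArg2. replace ((u2 - u2) / (u2 - u3)) with 0 by (field; lra).
    rewrite sqrt_0, asin_0. f_equal. ring. }
  rewrite <- E.
  apply (continuous_comp (fun x => PI/2 - asin (sqrt (sArg2 u2 u3 x))) (fun y => RInt (GG nu u1 u2 u3) 0 y)).
  - apply (continuous_minus (K:=R_AbsRing) (V:=R_NormedModule) (fun _ => PI/2)).
    apply continuous_const.
    apply cont_asin_sqrt. apply (ex_derive_continuous (K:=R_AbsRing) (V:=R_NormedModule)).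
    unfold sArg2. auto_derive. lra. unfold sArg2. field. lra.
  - apply contR; auto.
Qed.

Lemma fI_cont nu u1 u2 u3 x : Reg nu u1 u2 u3 -> u3 < x < u2 -> continuous (fI nu u1 u2 u3) x.
Proof.
  intros HR Hx. pose proof HR as [H1 [H2 H3]].
  assert (P : 0 < (x + nu) * (u1 - x) * (u2 - x) * (x - u3)) by (repeat apply Rmult_lt_0_compat; lra).
  apply (ex_derive_continuous (K:=R_AbsRing) (V:=R_NormedModule)).
  unfold fI. auto_derive. split. exact P. split; auto. apply Rgt_not_eq. apply sqrt_lt_R0. exact P.
Qed.

Lemma Iint_eq nu u1 u2 u3 : Reg nu u1 u2 u3 -> Iint nu u1 u2 u3 = Jint GG nu u1 u2 u3.
Proof.
  intros HR. pose proof HR as [H1 [H2 H3]].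
  unfold Iint. apply (is_RInt_gen_unique (V:=R_CompleteNormedModule)).
  set (m := (u3 + u2) / 2).
  assert (FP : filter_prod (at_right u3) (at_left u2)
     (fun ab : R * R => u3 < fst ab < m /\ m < snd ab < u2)).
  { apply (Filter_prod _ _ _ (fun a => u3 < a < m) (fun b => m < b < u2)).
    - exists (mkposreal (m - u3) ltac:(unfold m; lra)). intros y Hy Hy2.
      change (Rabs (y - u3) < m - u3) in Hy. apply Rabs_def2 in Hy. lra.
    - exists (mkposreal (u2 - m) ltac:(unfold m; lra)). intros y Hy Hy2.
      change (Rabs (y - u2) < u2 - m) in Hy. apply Rabs_def2 in Hy. lra.
    - intros a b Ha Hb. simpl. auto. }
  assert (G : is_RInt_gen (Derive (Phi nu u1 u2 u3)) (at_right u3) (at_left u2)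
                (Jint GG nu u1 u2 u3 - 0)).
  { apply is_RInt_gen_Derive.
    - eapply filter_imp. 2: exact FP. intros [a b] [Ha Hb] x Hx. simpl in *.
      rewrite Rmin_left in Hx by lra. rewrite Rmax_right in Hx by lra.
      eexists. apply dPhi; auto; lra.
    - eapply filter_imp. 2: exact FP. intros [a b] [Ha Hb] x Hx. simpl in *.
      rewrite Rmin_left in Hx by lra. rewrite Rmax_right in Hx by lra.
      apply (continuous_ext_loc _ (fI nu u1 u2 u3)).
      + exists (mkposreal (Rmin (x - u3) (u2 - x)) ltac:(apply Rmin_pos; lra)). intros y Hy.
        change (Rabs (y - x) < Rmin (x - u3) (u2 - x)) in Hy. apply Rabs_def2 in Hy.
        pose proof (Rmin_l (x - u3) (u2 - x)). pose proof (Rmin_r (x - u3) (u2 - x)).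
        symmetry. apply is_derive_unique. apply dPhi; auto; lra.
      + apply fI_cont; auto; lra.
    - apply Phi_lim3; auto.
    - apply Phi_lim2; auto. }
  rewrite Rminus_0_r in G.
  eapply is_RInt_gen_ext. 2: exact G.
  eapply filter_imp. 2: exact FP. intros [a b] [Ha Hb] x Hx. simpl in *.
  rewrite Rmin_left in Hx by lra. rewrite Rmax_right in Hx by lra.
  apply is_derive_unique. apply dPhi; auto; lra.
Qed.

Definition Gk (k : nat) := match k with 1%nat => G1 | 2%nat => G2 | _ => G3 end.
Definition Gs (i j : nat) :=
  match i, j with
  | 1%nat, 2%nat | 2%nat, 1%nat => G12
  | 1%nat, 3%nat | 3%nat, 1%nat => G13
  | _, _ => G23 end.

Lemma isd_ext_loc (f g : R -> R) (x l : R) :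
  locally x (fun t => f t = g t) -> is_derive f x l -> is_derive g x l.
Proof. intros. apply (is_derive_ext_loc (K:=R_AbsRing) (V:=R_NormedModule) f g x l); auto. Qed.

Lemma dI_along nu j u1 u2 u3 : Reg nu u1 u2 u3 -> (1 <= j <= 3)%nat ->
  is_derive (along j (Iint nu) u1 u2 u3) (coord j u1 u2 u3) (Jint (Gk j) nu u1 u2 u3).
Proof.
  intros HR Hj.
  destruct j as [|[|[|[|j]]]]; try lia; simpl.
  - eapply isd_ext_loc. 2: apply dJ0_1; auto.
    eapply filter_imp. 2: apply Reg_loc1; exact HR. intros y Hy. symmetry. apply Iint_eq; auto.
  - eapply isd_ext_loc. 2: apply dJ0_2; auto.
    eapply filter_imp. 2: apply Reg_loc2; exact HR. intros y Hy. symmetry. apply Iint_eq; auto.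
  - eapply isd_ext_loc. 2: apply dJ0_3; auto.
    eapply filter_imp. 2: apply Reg_loc3; exact HR. intros y Hy. symmetry. apply Iint_eq; auto.
Qed.

Lemma pdI nu k u1 u2 u3 : Reg nu u1 u2 u3 -> (1 <= k <= 3)%nat ->
  pd k (Iint nu) u1 u2 u3 = Jint (Gk k) nu u1 u2 u3.
Proof.
  intros HR Hk. pose proof (dI_along nu k u1 u2 u3 HR Hk) as D.
  apply is_derive_unique in D.
  destruct k as [|[|[|[|k]]]]; try lia; exact D.
Qed.

Lemma dpdI_along nu i j u1 u2 u3 : Reg nu u1 u2 u3 -> (1 <= i <= 3)%nat -> (1 <= j <= 3)%nat -> i <> j ->
  is_derive (along j (pd i (Iint nu)) u1 u2 u3) (coord j u1 u2 u3) (Jint (Gs i j) nu u1 u2 u3).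
Proof.
  intros HR Hi Hj Hij.
  destruct j as [|[|[|[|j]]]]; try lia; destruct i as [|[|[|[|i]]]]; try lia; simpl.
  - eapply isd_ext_loc. 2: apply dJ2_1; auto.
    eapply filter_imp. 2: apply Reg_loc1; exact HR. intros y Hy.
    symmetry. apply (pdI nu 2 y u2 u3); auto.
  - eapply isd_ext_loc. 2: apply dJ3_1; auto.
    eapply filter_imp. 2: apply Reg_loc1; exact HR. intros y Hy.
    symmetry. apply (pdI nu 3 y u2 u3); auto.
  - eapply isd_ext_loc. 2: apply dJ1_2; auto.
    eapply filter_imp. 2: apply Reg_loc2; exact HR. intros y Hy.
    symmetry. apply (pdI nu 1 u1 y u3); auto.
  - eapply isd_ext_loc. 2: apply dJ3_2; auto.
    eapply filter_imp. 2: apply Reg_loc2; exact HR. intros y Hy.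
    symmetry. apply (pdI nu 3 u1 y u3); auto.
  - eapply isd_ext_loc. 2: apply dJ1_3; auto.
    eapply filter_imp. 2: apply Reg_loc3; exact HR. intros y Hy.
    symmetry. apply (pdI nu 1 u1 u2 y); auto.
  - eapply isd_ext_loc. 2: apply dJ2_3; auto.
    eapply filter_imp. 2: apply Reg_loc3; exact HR. intros y Hy.
    symmetry. apply (pdI nu 2 u1 u2 y); auto.
Qed.

Lemma Eid nu i j u1 u2 u3 : Reg nu u1 u2 u3 -> (1 <= i <= 3)%nat -> (1 <= j <= 3)%nat -> i <> j ->
  2 * (coord i u1 u2 u3 - coord j u1 u2 u3) * Jint (Gs i j) nu u1 u2 u3
  = Jint (Gk i) nu u1 u2 u3 - Jint (Gk j) nu u1 u2 u3.
Proof.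
  intros HR Hi Hj Hij. pose proof HR as [H1 [H2 H3]].
  destruct j as [|[|[|[|j]]]]; try lia; destruct i as [|[|[|[|i]]]]; try lia; simpl.
  - rewrite E12 by auto. field. lra.
  - rewrite E13 by auto. field. lra.
  - rewrite E12 by auto. field. lra.
  - rewrite E23 by auto. field. lra.
  - rewrite E13 by auto. field. lra.
  - rewrite E23 by auto. field. lra.
Qed.

Lemma Jk_nz nu k u1 u2 u3 : Reg nu u1 u2 u3 -> (1 <= k <= 3)%nat -> Jint (Gk k) nu u1 u2 u3 <> 0.
Proof.
  intros HR Hk. destruct k as [|[|[|[|k]]]]; try lia; simpl.
  - pose proof (J1_neg nu u1 u2 u3 HR). lra.
  - pose proof (J2_pos nu u1 u2 u3 HR). lra.
  - pose proof (J3_pos nu u1 u2 u3 HR). lra.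
Qed.

Lemma core (W AI BI C D : R -> R) (x a1 b1 c1 d1 : R) :
  locally x (fun t => - (AI t / BI t) * C t + D t = W t) ->
  is_derive AI x a1 -> is_derive BI x b1 -> is_derive C x c1 -> is_derive D x d1 ->
  BI x <> 0 ->
  is_derive W x (- ((a1 * BI x - AI x * b1) / BI x ^ 2) * C x - AI x / BI x * c1 + d1).
Proof.
  intros HL DA DB DC DD HB.
  eapply isd_ext_loc. exact HL.
  pose proof (is_derive_div AI BI x a1 b1 DA DB HB) as D1.
  eapply isd_ext. reflexivity. 2: apply isd_plus. 3: exact DD.
  2: apply isd_mult. 3: exact DC. 2: apply isd_opp. 2: exact D1.
  cbv beta. ring.
Qed.

Lemma along_pt j g u1 u2 u3 : along j g u1 u2 u3 (coord j u1 u2 u3) = g u1 u2 u3.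
Proof. destruct j as [|[|[|j]]]; reflexivity. Qed.

Lemma Ck3_pd U n g i : Ck3 (S n) U g -> Ck3 n U (pd i g).
Proof.
  intros [_ [_ [H1 [H2 H3]]]]. destruct i as [|[|[|i]]]; simpl; auto.
Qed.

Lemma exd_along U g j u1 u2 u3 : Ck3 1 U g -> U u1 u2 u3 ->
  is_derive (along j g u1 u2 u3) (coord j u1 u2 u3) (pd j g u1 u2 u3).
Proof.
  intros [_ [Hd _]] HU. destruct (Hd _ _ _ HU) as [D1 [D2 D3]].
  destruct j as [|[|[|j]]]; simpl; apply Derive_correct; auto.
Qed.

Lemma lam_ext_int nu i u1 u2 u3 : u3 < u2 -> u2 < u1 -> lam_ext nu i u1 u2 u3 = lam nu i u1 u2 u3.
Proof.
  intros H1 H2. unfold lam_ext. destruct (Rlt_dec u3 u2); [|lra]. destruct (Rlt_dec u2 u1); [|lra]. auto.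
Qed.

Lemma wfun_int nu q i u1 u2 u3 : u3 < u2 -> u2 < u1 ->
  - (Iint nu u1 u2 u3 / pd i (Iint nu) u1 u2 u3) * pd i q u1 u2 u3 + q u1 u2 u3 = wfun nu q i u1 u2 u3.
Proof.
  intros H1 H2. unfold wfun. rewrite lam_ext_int by auto. unfold lam. ring.
Qed.

Lemma wfun_loc nu q i j u1 u2 u3 : Reg nu u1 u2 u3 ->
  locally (coord j u1 u2 u3) (fun t =>
    - (along j (Iint nu) u1 u2 u3 t / along j (pd i (Iint nu)) u1 u2 u3 t) * along j (pd i q) u1 u2 u3 t
    + along j q u1 u2 u3 t = along j (wfun nu q i) u1 u2 u3 t).
Proof.
  intros HR. destruct j as [|[|[|j]]]; simpl.
  1, 4: eapply filter_imp; [| apply Reg_loc3; exact HR]; intros y [_ [Hy1 Hy2]]; apply wfun_int; auto.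
  - eapply filter_imp; [| apply Reg_loc1; exact HR]; intros y [_ [Hy1 Hy2]]; apply wfun_int; auto.
  - eapply filter_imp; [| apply Reg_loc2; exact HR]; intros y [_ [Hy1 Hy2]]; apply wfun_int; auto.
Qed.

Lemma final_alg I Ji Jj Jij Qi Qj Qij q g d :
  I <> 0 -> Ji <> 0 -> Jj <> 0 -> d <> 0 ->
  2 * d * Jij = Ji - Jj -> 2 * (- d) * Qij = Qj - Qi ->
  - ((Jj * Ji - I * Jij) / Ji ^ 2) * Qi - I / Ji * Qij + Qj
  = / 2 * ((g - I / Ji - g) - 2 * d) / ((g - I / Jj - g) * d) *
    (((g - I / Ji - g) * Qi + q) - ((g - I / Jj - g) * Qj + q)).
Proof.
  intros HI Hi Hj Hd E1 E2.
  assert (Jij = (Ji - Jj) / (2 * d)) by (rewrite <- E1; field; auto).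
  assert (Qij = (Qi - Qj) / (2 * d)).
  { apply (Rmult_eq_reg_l (2 * (- d))). rewrite E2. field. auto. intro. apply Hd. lra. }
  subst Jij Qij. field. repeat split; auto. intro HH; apply HI; nra.
Qed.

Lemma Reg_of a b nu u1 u2 u3 : Rbar_le (Finite (- nu)) a -> in_interval a b u3 ->
  u3 < u2 -> u2 < u1 -> Reg nu u1 u2 u3.
Proof.
  intros Ha [H1 _] H2 H3. split; [|split; auto].
  destruct a as [a| |]; simpl in *; try tauto. lra.
Qed.

Lemma coord_neq i j u1 u2 u3 : (1 <= i <= 3)%nat -> (1 <= j <= 3)%nat -> i <> j ->
  u3 < u2 -> u2 < u1 -> coord i u1 u2 u3 - coord j u1 u2 u3 <> 0.
Proof.
  intros Hi Hj Hij H1 H2.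
  destruct j as [|[|[|[|j]]]]; try lia; destruct i as [|[|[|[|i]]]]; try lia; simpl; lra.
Qed.

Theorem theorem5p1 (nu : R) (a b : Rbar) (f : R -> R) (q : R -> R -> R -> R) :
  Rbar_le (Finite (- nu)) a -> Rbar_lt a b ->
  smooth1 (in_interval a b) f ->
  smooth3 (fun u1 u2 u3 => in_interval a b u1 /\ in_interval a b u2 /\
                           in_interval a b u3) q ->
  (forall (i j : nat) (u1 u2 u3 : R),
     (1 <= i <= 3)%nat -> (1 <= j <= 3)%nat ->
     in_interval a b u1 -> in_interval a b u2 -> in_interval a b u3 ->
     2 * (coord i u1 u2 u3 - coord j u1 u2 u3) * pd i (pd j q) u1 u2 u3
     = pd i q u1 u2 u3 - pd j q u1 u2 u3) ->
  (forall u, in_interval a b u -> q u u u = f u) ->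
  (forall (i j : nat) (u1 u2 u3 : R),
     (1 <= i <= 3)%nat -> (1 <= j <= 3)%nat -> i <> j ->
     in_interval a b u1 -> in_interval a b u2 -> in_interval a b u3 ->
     u3 < u2 -> u2 < u1 ->
     is_derive (along j (wfun nu q i) u1 u2 u3) (coord j u1 u2 u3)
       (Bcoef nu i j u1 u2 u3 * (wfun nu q i u1 u2 u3 - wfun nu q j u1 u2 u3))) /\
  (forall u1 u3 : R,
     in_interval a b u1 -> in_interval a b u3 -> u3 < u1 ->
     wfun nu q 1 u1 u1 u3 = wfun nu q 2 u1 u1 u3 /\
     wfun nu q 3 u1 u1 u3 = f u3 /\
     wfun nu q 1 u1 u3 u3 = f u1 /\
     wfun nu q 2 u1 u3 u3 = wfun nu q 3 u1 u3 u3).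
Proof.
  intros Hnu Hab Hfs Hq HP Hf. split.
  - intros i j u1 u2 u3 Hi Hj Hij Hu1 Hu2 Hu3 H32 H21.
    assert (HR : Reg nu u1 u2 u3) by (eapply Reg_of; eauto).
    assert (HU : UJ a b u1 u2 u3) by (repeat split; auto; apply Hu1 || apply Hu2 || apply Hu3).
    assert (Hq1 : Ck3 1 (UJ a b) q) by apply (Hq 1%nat).
    assert (Hqi : Ck3 1 (UJ a b) (pd i q)) by (apply Ck3_pd; apply (Hq 2%nat)).
    pose proof (core _ _ _ _ _ _ _ _ _ _ (wfun_loc nu q i j u1 u2 u3 HR)
      (dI_along nu j u1 u2 u3 HR Hj) (dpdI_along nu i j u1 u2 u3 HR Hi Hj Hij)
      (exd_along _ _ j u1 u2 u3 Hqi HU) (exd_along _ _ j u1 u2 u3 Hq1 HU)) as D.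
    rewrite !along_pt in D.
    rewrite (pdI nu i u1 u2 u3 HR Hi) in D.
    assert (HI : Iint nu u1 u2 u3 = Jint GG nu u1 u2 u3) by (apply Iint_eq; auto).
    rewrite HI in D.
    specialize (D (Jk_nz nu i u1 u2 u3 HR Hi)).
    eapply isd_ext. reflexivity. 2: exact D.
    unfold Bcoef, wfun. rewrite !lam_ext_int by auto. unfold lam.
    rewrite (pdI nu i u1 u2 u3 HR Hi), (pdI nu j u1 u2 u3 HR Hj), HI.
    apply final_alg.
    + pose proof (J0_pos nu u1 u2 u3 HR). lra.
    + apply Jk_nz; auto.
    + apply Jk_nz; auto.
    + apply coord_neq; auto.
    + apply Eid; auto.
    + pose proof (HP j i u1 u2 u3 Hj Hi Hu1 Hu2 Hu3) as P.
      rewrite <- P. ring.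
  - intros u1 u3 Hu1 Hu3 H31.
    pose proof (bd3 a b f q Hq HP Hf u1 u3 Hu1 Hu3) as B3.
    pose proof (bd1 a b f q Hq HP Hf u1 u3 Hu1 Hu3) as B1.
    pose proof (HP 2%nat 3%nat u1 u3 u3 ltac:(lia) ltac:(lia) Hu1 Hu3 Hu3) as P23.
    simpl in P23.
    unfold wfun, lam_ext, gam.
    destruct (Rlt_dec u3 u1); [|lra]. destruct (Rlt_dec u1 u1); [lra|].
    destruct (Rlt_dec u3 u3); [lra|]. simpl.
    repeat split.
    + ring.
    + rewrite <- B3. ring.
    + rewrite <- B1. ring.
    + replace (pd2 q u1 u3 u3) with (pd3 q u1 u3 u3) by lra. ring.
Qed.
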